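(* Consider linear implicit models $Ex_{t+1}=Fx_t+Ku_t$ with $E,F\in\mathbb{R}^{n\times n}$, $K\in\mathbb{R}^{n\times m}$. (i) If there exist $\epsilon>0$ and $\alpha\in(0,1)$ such that $E+E^\top\succ\epsilon I$, $E\in\mathbb{M}^n$, $F\ge0$, $K\ge0$ and $\mathbf{1}^\top(\alpha E-F)\ge0$, then $E$ is invertible and the explicit system $x_{t+1}=Ax_t+Bu_t$ with $A=E^{-1}F$, $B=E^{-1}K$ is a positive linear system with $A$ Schur stable (all eigenvalues of modulus $<1$). (ii) Conversely, for every $A\in\mathbb{R}^{n\times n}$ with $A\ge0$ Schur stable and every $B\in\mathbb{R}^{n\times m}$ with $B\ge0$, there exist $E$ (which can be taken diagonal with positive diagonal), $F$, $K$, $\epsilon>0$ and $\alpha\in(0,1)$ satisfying all conditions in (i) with $E^{-1}F=A$ and $E^{-1}K=B$. Hence these conditions parametrize exactly all stable discrete-time positive linear systems.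
   Context: Inequalities between vectors/matrices are elementwise; $\mathbf{1}$ is the all-ones column vector; $M\succ0$ means positive definite. $\mathbb{M}^n$ is the set of $n\times n$ nonsingular M-matrices: real matrices with off-diagonal entries $\le0$ and all eigenvalues having positive real part. A discrete-time linear system $x_{t+1}=Ax_t+Bu_t$ is positive if $x_0\ge0$ and $u_t\ge0$ for all $t$ imply $x_t\ge0$ for all $t$ (equivalently $A\ge0$, $B\ge0$). *)

(* Defs.v *)
From mathcomp Require Import all_boot all_order all_algebra all_reals complex.
Set Implicit Arguments. Unset Strict Implicit. Unset Printing Implicit Defensive.
Import Order.TTheory GRing.Theory Num.Theory.
Local Open Scope ring_scope.

Section Defs.
Variable R : realType.

Definition mx_nonneg p q (M : 'M[R]_(p, q)) : Prop := forall i j, 0 <= M i j.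

Definition posdef n (M : 'M[R]_n) : Prop :=
  forall x : 'cV[R]_n, x != 0 -> 0 < (x^T *m M *m x) 0 0.

Definition cmx p q (M : 'M[R]_(p, q)) : 'M[R[i]]_(p, q) :=
  map_mx (fun x : R => (x%:C)%C) M.

Definition Mmatrix n (E : 'M[R]_n) : Prop :=
  (forall i j : 'I_n, i != j -> E i j <= 0) /\
  (forall l : R[i], eigenvalue (cmx E) l -> 0 < 'Re l).

Definition schur_stable n (A : 'M[R]_n) : Prop :=
  forall l : R[i], eigenvalue (cmx A) l -> `|l| < 1.

Fixpoint traj n m (A : 'M[R]_n) (B : 'M[R]_(n, m)) (x0 : 'cV[R]_n)
    (u : nat -> 'cV[R]_m) (t : nat) : 'cV[R]_n :=
  match t with
  | 0 => x0
  | t'.+1 => A *m traj A B x0 u t' + B *m u t'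
  end.

Definition positive_system n m (A : 'M[R]_n) (B : 'M[R]_(n, m)) : Prop :=
  forall (x0 : 'cV[R]_n) (u : nat -> 'cV[R]_m),
    mx_nonneg x0 -> (forall t, mx_nonneg (u t)) ->
    forall t, mx_nonneg (traj A B x0 u t).

Definition ones_row n : 'rV[R]_n := const_mx 1.

Definition implicit_conds n m (E F : 'M[R]_n) (K : 'M[R]_(n, m)) (eps alpha : R)
  : Prop :=
  [/\ 0 < eps, 0 < alpha < 1, posdef (E + E^T - eps%:M), Mmatrix E &
      [/\ mx_nonneg F, mx_nonneg K & mx_nonneg (ones_row n *m (alpha *: E - F))]].

End Defs.

(* Main.v *)
Require Import Defs.
From mathcomp Require Import all_boot all_order all_algebra all_reals complex.
From mathcomp Require Import ring lra.
From mathcomp Require Import classical_sets.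
Import Order.TTheory GRing.Theory Num.Theory.
Local Open Scope ring_scope.
Set Implicit Arguments. Unset Strict Implicit. Unset Printing Implicit Defensive.

Definition Mono (R : realType) n (M : 'M[R]_n) :=
  forall p (Y : 'M[R]_(n, p)), mx_nonneg (M *m Y) -> mx_nonneg Y.

Lemma nonneg_mul (R : realType) p q r (A : 'M[R]_(p,q)) (B : 'M[R]_(q,r)) :
  mx_nonneg A -> mx_nonneg B -> mx_nonneg (A *m B).
Proof.
by move=> hA hB i j; rewrite mxE; apply: sumr_ge0 => k _; apply: mulr_ge0.
Qed.

Lemma nonneg1 (R : realType) n : mx_nonneg (1%:M : 'M[R]_n).
Proof. by move=> i j; rewrite mxE ler0n. Qed.

Lemma nonunit_ker (R : realType) n (M : 'M[R]_n) :
  M \notin unitmx -> exists2 x : 'cV[R]_n, x != 0 & M *m x = 0.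
Proof.
rewrite unitmxE unitfE negbK -det_tr => /det0P [v v0 hv].
exists v^T; first by rewrite trmx_eq0.
by rewrite -(trmxK M) -trmx_mul hv trmx0.
Qed.

Lemma Mono_unit (R : realType) n (M : 'M[R]_n) :
  Mono M -> M \in unitmx /\ mx_nonneg (invmx M).
Proof.
move=> hM; have Mu : M \in unitmx.
  apply: contraT => /nonunit_ker [x x0 Mx].
  have h1 : mx_nonneg x by apply: hM; rewrite Mx => i j; rewrite mxE.
  have h2 : mx_nonneg (- x) by apply: hM; rewrite mulmxN Mx oppr0 => i j; rewrite mxE.
  suff : x == 0 by rewrite (negbTE x0).
  apply/eqP/matrixP => i j; rewrite mxE.
  by apply/eqP; rewrite eq_le (h1 i j) andbT -oppr_ge0; move: (h2 i j); rewrite mxE.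
split => //; apply: hM; rewrite mulmxV //; exact: nonneg1.
Qed.

Lemma unit_Mono (R : realType) n (M : 'M[R]_n) :
  M \in unitmx -> mx_nonneg (invmx M) -> Mono M.
Proof.
by move=> Mu hi p Y hY; rewrite -(mulKmx Mu Y); apply: nonneg_mul.
Qed.

Lemma Mono_mul (R : realType) n (P Q : 'M[R]_n) :
  Mono P -> Mono Q -> Mono (P *m Q).
Proof. by move=> hP hQ p Y; rewrite -mulmxA => /hP /hQ. Qed.

Lemma quadE (R : realType) n (E : 'M[R]_n) (x : 'cV[R]_n) :
  (x^T *m E *m x) 0 0 = \sum_a \sum_b x a 0 * E a b * x b 0.
Proof.
rewrite mxE; under eq_bigr => b _ do rewrite mxE mulr_suml.
rewrite exchange_big; apply: eq_bigr => a _; apply: eq_bigr => b _.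
by rewrite mxE.
Qed.

Lemma Zpos_Mono (R : realType) n (E : 'M[R]_n) :
  (forall i j, i != j -> E i j <= 0) ->
  (forall x : 'cV[R]_n, x != 0 -> 0 < (x^T *m E *m x) 0 0) -> Mono E.
Proof.
move=> hZ hP p Y hY i j.
pose z : 'cV[R]_n := \col_k (if Y k j < 0 then - Y k j else 0).
pose q : 'cV[R]_n := \col_k (if Y k j < 0 then 0 else Y k j).
have zq k : z k 0 = q k 0 - Y k j by rewrite !mxE; case: ifP => _; rewrite ?sub0r ?subrr.
have z0 k : 0 <= z k 0 by rewrite !mxE; case: ifP => // /ltW; rewrite oppr_ge0.
have q0 k : 0 <= q k 0 by rewrite !mxE; case: ifP => // /negbT; rewrite -leNgt.
have zq0 k : z k 0 * q k 0 = 0 by rewrite !mxE; case: ifP => _; rewrite ?mulr0 ?mul0r.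
have hle : (z^T *m E *m z) 0 0 <= 0.
  rewrite quadE.
  have -> : \sum_a \sum_b z a 0 * E a b * z b 0 =
      \sum_a \sum_b z a 0 * E a b * q b 0 - \sum_a z a 0 * (E *m Y) a j.
    rewrite -sumrB; apply: eq_bigr => a _; rewrite [(E *m Y) a j]mxE mulr_sumr -sumrB.
    by apply: eq_bigr => b _; rewrite (zq b) mulrBr mulrA.
  have hA : \sum_a \sum_b z a 0 * E a b * q b 0 <= 0.
    apply: sumr_le0 => a _; apply: sumr_le0 => b _.
    have [<-|ab] := eqVneq a b; first by rewrite mulrAC zq0 mul0r.
    by apply: mulr_le0_ge0 => //; apply: mulr_ge0_le0 => //; apply: hZ.
  have hB : 0 <= \sum_a z a 0 * (E *m Y) a j.
    by apply: sumr_ge0 => a _; apply: mulr_ge0.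
  lra.
have zz : z = 0 by apply/eqP; apply: contraTT hle => /hP; rewrite -ltNge.
rewrite leNgt; apply/negP => Yneg.
have := congr1 (fun M : 'cV[R]_n => M i 0) zz; rewrite !mxE Yneg => /eqP.
by rewrite oppr_eq0 => /eqP Y0; rewrite Y0 ltxx in Yneg.
Qed.

Lemma DD_Mono (R : realType) n (N : 'M[R]_n) h :
  mx_nonneg N -> 0 <= h -> (forall i, h * \sum_j N i j < 1) ->
  Mono (1%:M - h *: N).
Proof.
move=> hN h0 hs p Y hY i j; rewrite leNgt; apply/negP => Yneg.
case: (@arg_minP _ _ _ i xpredT (fun k => Y k j) isT) => k0 _ kmin.
have Yk : Y k0 j < 0 by apply: le_lt_trans (kmin i isT) Yneg.
have := hY k0 j.
rewrite mulmxBl mul1mx -scalemxAl !mxE.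
have : h * (\sum_l N k0 l) * Y k0 j <= h * \sum_l (N k0 l * Y l j).
  rewrite -mulrA mulr_suml; apply: ler_wpM2l => //.
  by apply: ler_sum => l _; apply: ler_wpM2l => //; apply: kmin.
have := hs k0; move: (h * \sum_l N k0 l) => s.
move: (\sum_l (N k0 l * Y l j)) => t; nra.
Qed.

Definition tot (R : realType) p q (X : 'M[R]_(p, q)) := \sum_i \sum_j X i j.

Lemma row_le_tot (R : realType) p q (X : 'M[R]_(p, q)) i :
  mx_nonneg X -> \sum_j X i j <= tot X.
Proof.
move=> hX; rewrite /tot (bigD1 i) //= lerDl.
by apply: sumr_ge0 => k _; apply: sumr_ge0.
Qed.

Lemma tot_ge0 (R : realType) p q (X : 'M[R]_(p, q)) : mx_nonneg X -> 0 <= tot X.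
Proof. by move=> hX; apply: sumr_ge0 => i _; apply: sumr_ge0. Qed.

Lemma tot_mul (R : realType) p q r (X : 'M[R]_(p, q)) (Y : 'M[R]_(q, r)) :
  mx_nonneg X -> mx_nonneg Y -> tot (X *m Y) <= tot X * tot Y.
Proof.
move=> hX hY; rewrite /tot mulr_suml; apply: ler_sum => i _.
under eq_bigr => j _ do rewrite mxE.
rewrite exchange_big mulr_suml /=; apply: ler_sum => k _.
rewrite -mulr_sumr; apply: ler_wpM2l => //; exact: row_le_tot.
Qed.

Definition Ma (R : realType) n (A : 'M[R]_n) (t : R) := 1%:M - t *: A.

Lemma step (R : realType) n (A : 'M[R]_n) t h :
  mx_nonneg A -> Mono (Ma A t) -> 0 <= h ->
  h * tot (invmx (Ma A t) *m A) < 1 -> Mono (Ma A (t + h)).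
Proof.
move=> hA hG h0 hh; have [Mu Gn] := Mono_unit hG.
have -> : Ma A (t + h) = Ma A t *m (1%:M - h *: (invmx (Ma A t) *m A)).
  rewrite mulmxBr mulmx1 -scalemxAr mulmxA mulmxV // mul1mx /Ma.
  by rewrite scalerDl opprD addrA.
apply: Mono_mul => //; apply: DD_Mono => //; first exact: nonneg_mul.
move=> i; apply: le_lt_trans hh; apply: ler_wpM2l => //.
by apply: row_le_tot; apply: nonneg_mul.
Qed.

Lemma bound (R : realType) n (A : 'M[R]_n) t h :
  mx_nonneg A -> Mono (Ma A t) -> 0 <= h -> Ma A (t + h) \in unitmx ->
  h * (\sum_k \sum_j `|(A *m invmx (Ma A (t + h))) k j|) <= 1/2 ->
  tot (invmx (Ma A t)) <= 2 * \sum_i \sum_j `|invmx (Ma A (t + h)) i j|.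
Proof.
move=> hA hG h0 MTu hc; have [Mu Mn] := Mono_unit hG.
set G := invmx (Ma A (t + h)) in hc *; set M := invmx (Ma A t) in Mn *.
set c := \sum_k _ in hc.
have e1 : M *m Ma A (t + h) = 1%:M - h *: (M *m A).
  have -> : Ma A (t + h) = Ma A t - h *: A by rewrite /Ma scalerDl opprD addrA.
  by rewrite mulmxBr -scalemxAr mulVmx.
have eM : M = G - h *: (M *m (A *m G)).
  by rewrite -{1}(mulmx1 M) -(mulmxV MTu) -/G mulmxA e1 mulmxBl mul1mx -scalemxAl mulmxA.
have ent i j : M i j <= `|G i j| + h * \sum_k M i k * `|(A *m G) k j|.
  rewrite {1}eM !mxE; apply: lerD; first exact: ler_norm.
  rewrite -mulrN; apply: ler_wpM2l => //; rewrite -sumrN; apply: ler_sum => k _.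
  rewrite -mulrN; apply: ler_wpM2l => //; rewrite -normrN; exact: ler_norm.
have hb : \sum_i \sum_j \sum_k M i k * `|(A *m G) k j| <= c * tot M.
  rewrite /tot mulr_sumr; apply: ler_sum => i _.
  rewrite exchange_big /= mulr_sumr; apply: ler_sum => k _.
  rewrite -mulr_sumr mulrC; apply: ler_wpM2r => //.
  rewrite /c [X in _ <= X](bigD1 k) //= lerDl; apply: sumr_ge0 => l _; apply: sumr_ge0 => *.
  exact: normr_ge0.
have : tot M <= \sum_i \sum_j `|G i j| + h * (c * tot M).
  apply: le_trans (_ : \sum_i \sum_j (`|G i j| + h * \sum_k M i k * `|(A *m G) k j|) <= _).
    by apply: ler_sum => i _; apply: ler_sum => j _; apply: ent.
  under eq_bigr => i _ do rewrite big_split /= -mulr_sumr.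
  rewrite big_split /= -mulr_sumr; apply: lerD => //; exact: ler_wpM2l.
have := tot_ge0 Mn; have : 0 <= h * c.
  by apply: mulr_ge0 => //; apply: sumr_ge0 => *; apply: sumr_ge0 => *.
move: (tot M) (\sum_i \sum_j `|G i j|) => x y; nra.
Qed.

Lemma Mono1 (R : realType) n : Mono (1%:M : 'M[R]_n).
Proof. by move=> p Y; rewrite mul1mx. Qed.

Lemma cont (R : realType) n (A : 'M[R]_n) :
  mx_nonneg A -> (forall T, 0 <= T <= 1 -> Ma A T \in unitmx) -> Mono (Ma A 1).
Proof.
move=> hA hU.
pose S : set R := fun t => 0 <= t <= 1 /\ forall s, 0 <= s <= t -> Mono (Ma A s).
have S0 : S 0.
  split; first by rewrite lexx ler01.
  move=> s /andP[s0 s1]; have -> : s = 0 by apply/eqP; rewrite eq_le s1 s0.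
  by rewrite /Ma scale0r subr0; apply: Mono1.
have hS : has_sup S by split; [exists 0 | exists 1 => x [/andP[]]].
set T := sup S.
have T0 : 0 <= T by apply: sup_upper_bound.
have T1 : T <= 1 by apply: ge_sup; [exists 0 | move=> x [/andP[]]].
have TU := hU T ltac:(by rewrite T0 T1).
set G := invmx (Ma A T).
pose c := \sum_k \sum_j `|(A *m G) k j|.
pose g := \sum_i \sum_j `|G i j|.
have c0 : 0 <= c by apply: sumr_ge0 => *; apply: sumr_ge0 => *.
have g0 : 0 <= g by apply: sumr_ge0 => *; apply: sumr_ge0 => *.
have a0 : 0 <= tot A by apply: tot_ge0.
pose b := 2 * g * tot A.
have b0 : 0 <= b by rewrite /b; apply: mulr_ge0 => //; apply: mulr_ge0.
pose h' := 1 / (b + 1).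
have h'0 : 0 < h' by rewrite /h' divr_gt0 // ltr_wpDl.
have h'b : h' * b < 1.
  have : h' * (b + 1) = 1 by rewrite /h' mul1r mulVf // gt_eqF // ltr_wpDl.
  nra.
pose d := Num.min (h' / 2) (1 / (2 * c + 2)).
have d0 : 0 < d by rewrite lt_min divr_gt0 //= divr_gt0 // ltr_wpDl // mulr_ge0.
have dh : d <= h' / 2 by rewrite ge_min lexx.
have dc : d * (2 * c + 2) <= 1.
  have : d <= 1 / (2 * c + 2) by rewrite ge_min lexx orbT.
  by rewrite ler_pdivlMr // ltr_wpDl // mulr_ge0.
have [t St Tt] := sup_adherent d0 hS.
rewrite -/T in Tt.
have tT : t <= T by apply: sup_upper_bound.
have Gt : Mono (Ma A t) by apply: St.2; rewrite lexx andbT; case: St => /andP[].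
have eT : t + (T - t) = T by rewrite addrC subrK.
have totM : tot (invmx (Ma A t)) <= 2 * g.
  have := @bound _ _ A t (T - t) hA Gt; rewrite eT subr_ge0 -/G; apply => //.
  have : (T - t) * (2 * c + 2) <= d * (2 * c + 2).
    by apply: ler_wpM2r; [rewrite addr_ge0 // mulr_ge0 | lra].
  rewrite -/c; nra.
have [Mu Mn] := Mono_unit Gt.
have claim s : t <= s <= t + h' -> Mono (Ma A s).
  move=> /andP[ts sth]; have -> : s = t + (s - t) by rewrite addrC subrK.
  apply: step => //; first by rewrite subr_ge0.
  have hx : tot (invmx (Ma A t) *m A) <= b.
    apply: le_trans (tot_mul Mn hA) _; rewrite /b; apply: ler_wpM2r => //.
  have := tot_ge0 (nonneg_mul Mn hA).
  move: (tot _) hx => x hx x0; nra.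
have [th1|th1] := leP (t + h') 1.
  have : S (t + h').
    split; first by rewrite th1 andbT; case: St => /andP[t0 _] _; rewrite addr_ge0 // ltW.
    move=> s /andP[s0 sth]; have [st|ts] := leP s t; first by apply: St.2; rewrite s0 st.
    by apply: claim; rewrite sth andbT ltW.
  move=> /(sup_upper_bound hS) /=; rewrite -/T => hT; lra.
by apply: claim; rewrite (ltW th1) andbT; case: St => /andP[].
Qed.

Lemma normcR (R : realType) (x : R) : `|(x%:C)%C| = (`|x|%:C)%C.
Proof. by rewrite normc_def /= expr0n addr0 sqrtr_sqr. Qed.

Lemma schur_unit (R : realType) n (A : 'M[R]_n) :
  schur_stable A -> forall T, 0 <= T <= 1 -> Ma A T \in unitmx.
Proof.
move=> hS T /andP[T0 T1]; have [->|Tn0] := eqVneq T 0.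
  by rewrite /Ma scale0r subr0 unitmx1.
apply: contraT; rewrite unitmxE unitfE negbK => /det0P [v v0 hv].
have Tp : 0 < T by rewrite lt_def Tn0.
have vA : v *m A = T^-1 *: v.
  move: hv; rewrite /Ma mulmxBr mulmx1 -scalemxAr => /eqP; rewrite subr_eq0 => /eqP e.
  by rewrite [in RHS]e scalerA mulVf // scale1r.
have eig : eigenvalue (cmx A) ((T^-1)%:C)%C.
  apply/eigenvalueP; exists (cmx v); last by rewrite /cmx map_mx_eq0.
  by rewrite /cmx -map_mxM vA map_mxZ.
have := hS _ eig; rewrite normcR ltcR ger0_norm ?invr_ge0 ?ltW //.
rewrite invf_lt1 //; lra.
Qed.

Lemma posdef_quad (R : realType) n (E : 'M[R]_n) eps :
  0 < eps -> posdef (E + E^T - eps%:M) ->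
  forall x : 'cV[R]_n, x != 0 -> 0 < (x^T *m E *m x) 0 0.
Proof.
move=> e0 hP x x0; have := hP x x0; rewrite !quadE.
have -> : \sum_a \sum_b x a 0 * (E + E^T - eps%:M) a b * x b 0 =
   \sum_a \sum_b x a 0 * E a b * x b 0 + \sum_a \sum_b x a 0 * E b a * x b 0
   - \sum_a \sum_b x a 0 * (eps *+ (a == b)) * x b 0.
  rewrite -big_split /= -sumrB; apply: eq_bigr => a _.
  rewrite -big_split /= -sumrB; apply: eq_bigr => b _; rewrite !mxE; ring.
have -> : \sum_a \sum_b x a 0 * E b a * x b 0 = \sum_a \sum_b x a 0 * E a b * x b 0.
  rewrite exchange_big; apply: eq_bigr => a _; apply: eq_bigr => b _; ring.
have : 0 <= \sum_a \sum_b x a 0 * (eps *+ (a == b)) * x b 0.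
  apply: sumr_ge0 => a _; apply: sumr_ge0 => b _.
  have [<-|ab] := eqVneq a b; last by rewrite mulr0n mulr0 mul0r.
  by rewrite mulr1n mulrAC -expr2 mulr_ge0 // ?sqr_ge0 ?ltW.
lra.
Qed.

Lemma right_eig (F : fieldType) n (g : 'M[F]_n) l :
  eigenvalue g l -> exists2 x : 'cV[F]_n, x != 0 & g *m x = l *: x.
Proof.
move=> /eigenvalueP [v vg v0].
have : \det (l%:M - g) == 0.
  apply/det0P; exists v => //; by rewrite mulmxBr mul_mx_scalar vg subrr.
rewrite -det_tr => /det0P [w w0 hw]; exists w^T; first by rewrite trmx_eq0.
move: hw => /(congr1 trmx); rewrite trmx_mul trmxK trmx0 mulmxBl => /eqP.
by rewrite subr_eq0 mul_scalar_mx => /eqP <-.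
Qed.

Lemma cmxM (R : realType) p q r (A : 'M[R]_(p,q)) (B : 'M[R]_(q,r)) :
  cmx (A *m B) = cmx A *m cmx B.
Proof. by rewrite /cmx map_mxM. Qed.

Lemma part1_schur (R : realType) n (E F : 'M[R]_n) alpha :
  E \in unitmx -> mx_nonneg (invmx E) -> mx_nonneg F -> alpha < 1 ->
  mx_nonneg (ones_row R n *m (alpha *: E - F)) -> schur_stable (invmx E *m F).
Proof.
move=> Eu Ei hF a1 hrow l /right_eig [x x0 hx].
pose C := F *m invmx E.
have C0 : mx_nonneg C by apply: nonneg_mul.
have cEu : cmx E \in unitmx by rewrite /cmx map_unitmx.
set y := cmx E *m x.
have y0 : y != 0.
  apply: contraNneq x0 => y0; by rewrite -(mulKmx cEu x) -/y y0 mulmx0.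
have hy : cmx C *m y = l *: y.
  rewrite /y /C mulmxA -cmxM -mulmxA mulVmx // mulmx1.
  have -> : F = E *m (invmx E *m F) by rewrite mulKVmx.
  by rewrite cmxM -mulmxA hx scalemxAr.
have colC j : \sum_i C i j <= alpha.
  have := nonneg_mul hrow Ei 0 j.
  have -> : ones_row R n *m (alpha *: E - F) *m invmx E = alpha *: ones_row R n - ones_row R n *m C.
    by rewrite mulmxBr mulmxBl -!mulmxA -scalemxAl mulmxV // -scalemxAr mulmx1.
  rewrite !mxE subr_ge0 => h; move: h; rewrite mulr1; under eq_bigr => i _ do rewrite mxE mul1r; done.
have key i : `|l| * `|y i 0| <= \sum_j ((C i j)%:C)%C * `|y j 0|.
  have e : (l *: y) i 0 = l * y i 0 by rewrite mxE.
  rewrite -normrM -e -hy mxE.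
  apply: le_trans (ler_norm_sum _ _ _) _; apply: ler_sum => j _.
  by rewrite normrM /cmx mxE normcR (ger0_norm (C0 i j)).
pose S := \sum_i `|y i 0|.
have hsum : `|l| * S <= (alpha%:C)%C * S.
  rewrite mulr_sumr; apply: le_trans (ler_sum _ (fun i _ => key i)) _.
  rewrite exchange_big mulr_sumr /=; apply: ler_sum => j _.
  rewrite -mulr_suml; apply: ler_wpM2r => //.
  by rewrite -rmorph_sum lecR.
have /existsP [i yi] : [exists i, y i 0 != 0].
  move: y0; apply: contraNT => /existsPn h; apply/eqP/matrixP => a b.
  by rewrite ord1 [RHS]mxE; apply/eqP/negPn; exact: h.
have S0 : 0 < S.
  rewrite /S (bigD1 i) //=; apply: lt_le_trans (_ : 0 < `|y i 0|) _.
    by rewrite normr_gt0.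
  by rewrite lerDl sumr_ge0.
rewrite ler_pM2r // in hsum; apply: le_lt_trans hsum _.
have -> : (1 : R[i]) = (1%:C)%C by [].
by rewrite ltcR.
Qed.

Lemma pos_sys (R : realType) n m (A : 'M[R]_n) (B : 'M[R]_(n, m)) :
  mx_nonneg A -> mx_nonneg B -> positive_system A B.
Proof.
move=> hA hB x0 u hx hu; elim => [|t IH] //= i j; rewrite mxE.
by apply: addr_ge0; apply: nonneg_mul.
Qed.

Lemma part1 (R : realType) n m (E F : 'M[R]_n) (K : 'M[R]_(n, m)) eps alpha :
  implicit_conds E F K eps alpha ->
  [/\ E \in unitmx,
      positive_system (invmx E *m F) (invmx E *m K) &
      schur_stable (invmx E *m F)].
Proof.
case=> e0 /andP[a0 a1] hP [hZ _] [hF hK hrow].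
have [Eu Ei] := Mono_unit (Zpos_Mono hZ (posdef_quad e0 hP)).
split => //; first by apply: pos_sys; apply: nonneg_mul.
exact: (part1_schur Eu Ei hF a1 hrow).
Qed.

Lemma ones_E (R : realType) n i j : ones_row R n i j = 1.
Proof. by rewrite /ones_row mxE. Qed.

Lemma nz_entry (F : fieldType) p (x : 'M[F]_(p, 1)) :
  x != 0 -> exists a, x a 0 != 0.
Proof.
move=> x0; have /existsP [a ha] : [exists a, x a 0 != 0]; last by exists a.
move: x0; apply: contraNT => /existsPn h; apply/eqP/matrixP => a b.
by rewrite ord1 [RHS]mxE; apply/eqP/negPn; exact: h.
Qed.

Lemma diag_quad (R : realType) n (w : 'rV[R]_n) :
  (forall a, 0 < w 0 a) -> posdef (diag_mx w).
Proof.
move=> hw x x0; rewrite quadE.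
have -> : \sum_a \sum_b x a 0 * diag_mx w a b * x b 0 = \sum_a w 0 a * x a 0 ^+ 2.
  apply: eq_bigr => a _; rewrite (bigD1 a) //= big1 ?addr0.
    by rewrite mxE eqxx mulr1n expr2; ring.
  by move=> b ba; rewrite mxE eq_sym (negbTE ba) mulr0n mulr0 mul0r.
have [a xa] := nz_entry x0.
rewrite (bigD1 a) //=; apply: lt_le_trans (_ : 0 < w 0 a * x a 0 ^+ 2) _.
  by rewrite mulr_gt0 // exprn_even_gt0.
rewrite lerDl; apply: sumr_ge0 => b _; apply: mulr_ge0; [exact: ltW | exact: sqr_ge0].
Qed.

Lemma diag_Mmatrix (R : realType) n (w : 'rV[R]_n) :
  (forall a, 0 < w 0 a) -> Mmatrix (diag_mx w).
Proof.
move=> hw; split.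
  by move=> i j ij; rewrite mxE (negbTE ij) mulr0n.
move=> l /eigenvalueP [v hv v0].
have e : cmx (diag_mx w) = diag_mx (cmx w).
  apply/matrixP => a b; rewrite !mxE; case: eqVneq => _; rewrite ?mulr1n ?mulr0n //.
have vT : v^T != 0 by rewrite trmx_eq0.
have [j vj] := nz_entry vT; rewrite mxE in vj.
move: hv; rewrite e mul_mx_diag => /(congr1 (fun M : 'rV[R[i]]_n => M 0 j)); rewrite !mxE.
rewrite mulrC => /(mulIf vj) <-.
have rl : ((w 0 j)%:C)%C \is Num.real by rewrite complex_real.
rewrite (Creal_ReP _ rl).
have -> : (0 : R[i]) = (0%:C)%C by [].
by rewrite ltcR.
Qed.

Lemma part2 (R : realType) n m (A : 'M[R]_n) (B : 'M[R]_(n, m)) :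
  mx_nonneg A -> schur_stable A -> mx_nonneg B ->
  exists (E F : 'M[R]_n) (K : 'M[R]_(n, m)) (eps alpha : R),
    [/\ is_diag_mx E, (forall i, 0 < E i i), implicit_conds E F K eps alpha,
        invmx E *m F = A & invmx E *m K = B].
Proof.
move=> hA hS hB.
have [U N0] := Mono_unit (cont hA (schur_unit hS)).
have o0 : mx_nonneg (ones_row R n) by move=> i j; rewrite ones_E ler01.
have [d [dA d0]] : exists d : 'rV[R]_n, d = ones_row R n + d *m A /\ mx_nonneg d.
  exists (ones_row R n *m invmx (Ma A 1)); split; last exact: nonneg_mul.
  have := mulmxKV U (ones_row R n).
  rewrite {2}/Ma scale1r mulmxBr mulmx1 => /eqP; rewrite subr_eq => /eqP {1}<-.
  by [].
have d1 j : 1 <= d 0 j.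
  rewrite dA mxE ones_E lerDl; exact: nonneg_mul.
pose s := \sum_j d 0 j.
have s0 : 0 <= s by apply: sumr_ge0 => j _.
have ds j : d 0 j <= s.
  by rewrite /s (bigD1 j) //= lerDl; apply: sumr_ge0 => k _.
pose alpha := 1 - 1 / (s + 2).
have dpos j : 0 < d 0 j by apply: lt_le_trans (d1 j); exact: ltr01.
pose E := diag_mx d.
have Eu : E \in unitmx.
  by rewrite unitmxE det_diag unitfE gt_eqF // prodr_gt0.
have E0 : mx_nonneg E by move=> i j; rewrite mxE mulrn_wge0.
exists E, (E *m A), (E *m B), 1, alpha; split.
- exact: diag_mx_is_diag.
- by move=> i; rewrite mxE eqxx mulr1n.
- split.
  + exact: ltr01.
  + apply/andP; split; rewrite /alpha.
      rewrite subr_gt0 ltr_pdivrMr ?mul1r; lra.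
    rewrite ltrBlDr ltrDl divr_gt0 //; lra.
  + have -> : E + E^T - 1%:M = diag_mx (2 *: d - ones_row R n).
      apply/matrixP => a b; rewrite !mxE.
      case: eqVneq => [->|ab]; first by rewrite ?eqxx ?mulr1n; ring.
      by rewrite !mulr0n ?addr0 ?subr0.
    apply: diag_quad => a; rewrite !mxE; have := d1 a; lra.
  + exact: diag_Mmatrix.
  + split; [exact: nonneg_mul | exact: nonneg_mul |].
    have oE : ones_row R n *m E = d.
      by apply/matrixP => a b; rewrite mul_mx_diag !mxE ?ones_E mul1r (ord1 a).
    have -> : ones_row R n *m (alpha *: E - E *m A) = ones_row R n - (1 - alpha) *: d.
      rewrite mulmxBr -scalemxAr mulmxA oE; apply/matrixP => a b.
      have e : d a b = 1 + \sum_j d a j * A j b by rewrite {1}dA !mxE.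
      rewrite !mxE e; ring.
    move=> a b; rewrite !mxE /alpha (ord1 a).
    have s2 : 0 < s + 2 by lra.
    have q0 : 0 < 1 / (s + 2) by rewrite divr_gt0.
    have qe : 1 / (s + 2) * (s + 2) = 1 by rewrite mul1r mulVf // gt_eqF.
    have := ds b; have := d1 b.
    move: (1 / (s + 2)) q0 qe => q q0 qe; move: (d 0 b) => x; nra.
- by rewrite mulKmx.
- by rewrite mulKmx.
Qed.

Theorem theorem2 (R : realType) (n m : nat) :
  (forall (E F : 'M[R]_n) (K : 'M[R]_(n, m)) (eps alpha : R),
      implicit_conds E F K eps alpha ->
      [/\ E \in unitmx,
          positive_system (invmx E *m F) (invmx E *m K) &
          schur_stable (invmx E *m F)]) /\
  (forall (A : 'M[R]_n) (B : 'M[R]_(n, m)),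
      mx_nonneg A -> schur_stable A -> mx_nonneg B ->
      exists (E F : 'M[R]_n) (K : 'M[R]_(n, m)) (eps alpha : R),
        [/\ is_diag_mx E, (forall i, 0 < E i i),
            implicit_conds E F K eps alpha,
            invmx E *m F = A & invmx E *m K = B]).
Proof.
split; [exact: part1 | exact: part2].
Qed.
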